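(* Let $A_{\mathrm{app}},B_{\mathrm{app}}\in K[X]$ with $n=\deg A_{\mathrm{app}}\ge d=\deg B_{\mathrm{app}}\ge1$, and assume that $B_{\mathrm{app}}$ has a nonzero coefficient in degree $<d$. Let $\varphi_A$ (on $[0,n]$) and $\varphi_B$ (on $[0,d]$) be Newton functions such that the precisions $O(\varphi_A)$ on $A_{\mathrm{app}}$ and $O(\varphi_B)$ on $B_{\mathrm{app}}$ are nondegenerate. Set $$\varphi=\varphi_A\,\overline{+}\,\big[\varphi_B\,\overline{\times}\,(\mathrm{NF}(A_{\mathrm{app}})\,\overline{\div}\,\mathrm{NF}(B_{\mathrm{app}}))\big],$$ and let $Q_{\mathrm{app}}=A_{\mathrm{app}}\,\mathrm{div}\,B_{\mathrm{app}}$ and $R_{\mathrm{app}}=A_{\mathrm{app}}\bmod B_{\mathrm{app}}$. Then for all $\delta A\in K_{\le n}[X]$ and $\delta B\in K_{\le d}[X]$ with $\mathrm{NF}(\delta A)\ge\varphi_A$ and $\mathrm{NF}(\delta B)\ge\varphi_B$, the polynomials $$Q=(A_{\mathrm{app}}+\delta A)\,\mathrm{div}\,(B_{\mathrm{app}}+\delta B),\qquad R=(A_{\mathrm{app}}+\delta A)\bmod(B_{\mathrm{app}}+\delta B)$$ satisfy $$\mathrm{NF}(Q-Q_{\mathrm{app}})\ge \varphi\,\overline{\div}\,\mathrm{NF}(B_{\mathrm{app}}),\qquad \mathrm{NF}(R-R_{\mathrm{app}})\ge\varphi\,\overline{\bmod}\,\mathrm{NF}(B_{\mathrm{app}}).$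$
   Context: $K$ is a complete discrete valuation field with valuation $\mathrm{val}:K\to\mathbb Z\cup\{+\infty\}$, normalized to be surjective, with $\mathrm{val}(0)=+\infty$. $K_{\le n}[X]$ denotes the polynomials of degree at most $n$. For $Q=\sum q_iX^i\in K[X]$ nonzero of degree $m$, its Newton function $\mathrm{NF}(Q):[0,m]\to\mathbb R\cup\{+\infty\}$ is the greatest convex function with $\mathrm{NF}(Q)(i)\le \mathrm{val}(q_i)$ for all integers $0\le i\le m$. Its epigraph is the Newton polygon $\mathrm{NP}(Q)$; an extremal point of $\mathrm{NP}(Q)$ is a vertex of this epigraph. For a convex function $g$ on $[0,M]$ and a polynomial $Q$ of degree $\le M$, ''$\mathrm{NF}(Q)\ge g$'' means $\mathrm{val}(q_i)\ge g(i)$ for all integers $0\le i\le M$. A Newton function of degree $n$ is a convex, piecewise affine function $[0,n]\to\mathbb R\cup\{+\infty\}$, finite at $n$, whose epigraph has extremal points with integral abscissae. Given $P_{\mathrm{app}}$ of degree $n$ and a Newton function $\varphi_P$ of degree $n$, the precision $O(\varphi_P)$ on $P_{\mathrm{app}}$ is nondegenerate if $\varphi_P\ge\mathrm{NF}(P_{\mathrm{app}})$ and $\varphi_P(x)>y$ for every extremal point $(x,y)$ of $\mathrm{NP}(P_{\mathrm{app}})$. $A\,\mathrm{div}\,B$ and $A\bmod B$ are the quotient and remainder of Euclidean division: $A=(A\,\mathrm{div}\,B)B+(A\bmod B)$ with $\deg(A\bmod B)<\deg B$. Operations on convex functions: - $\varphi\,\overline{+}\,\psi$ is the greatest convex function below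 both $\varphi$ and $\psi$; its epigraph is the convex hull of the union of the epigraphs. - $\varphi\,\overline{\times}\,\psi$, for $\varphi$ on $[0,n]$ and $\psi$ on $[0,m]$, is the function on $[0,n+m]$ given by $(\varphi\,\overline{\times}\,\psi)(x)=\inf_{y+z=x}\varphi(y)+\psi(z)$. Euclidean division of Newton functions: let $\varphi$ be convex on $[0,n]$, finite at $n$, and $\psi$ convex on $[0,d]$ with $1\le d\le n$ and $\psi(d-1),\psi(d)$ finite. Set $\lambda=\psi(d)-\psi(d-1)$. Let $\Delta$ be the greatest affine function of slope $\lambda$ with $\Delta\le\varphi$ on $[d,n]$, and set $\delta=\Delta(d)-\psi(d)$. Define - $\varphi\,\overline{\bmod}\,\psi=\varphi|_{[0,d-1]}\,\overline{+}\,(\psi|_{[0,d-1]}+\delta)$ on $[0,d-1]$; - $(\varphi\,\overline{\div}\,\psi)(x)=\inf_{h\ge0,\ x+d+h\le n}\big(\varphi(x+d+h)-\lambda h\big)-\psi(d)$ for $x\in[0,n-d]$. *)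

(* Defs.v *)
(* Since both libraries use the scope key
   %R, real arithmetic below is written with explicit function names
   (Rplus, Rmult, Rle, ...); %R refers to MathComp's ring_scope. *)
From Stdlib Require Import Reals ClassicalEpsilon ZArith.
From mathcomp Require Import all_boot all_algebra.

Set Implicit Arguments.
Unset Strict Implicit.
Unset Printing Implicit Defensive.

(* Discrete valuations  val : K -> Z u {+oo}   (None = +oo)             *)

Definition oZle (a b : option Z) : Prop :=
  match a, b with
  | _, None => True
  | None, Some _ => False
  | Some x, Some y => Z.le x y
  end.

Definition oZmin (a b : option Z) : option Z :=
  match a, b with
  | None, b => b
  | a, None => a
  | Some x, Some y => Some (Z.min x y)
  end.

Definition oZadd (a b : option Z) : option Z :=
  match a, b with
  | Some x, Some y => Some (Z.add x y)
  | _, _ => None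
  end.

Definition val_ge (K : fieldType) (v : K -> option Z) (x : K) (N : Z) : Prop :=
  oZle (Some N) (v x).

Definition is_discrete_valuation (K : fieldType) (v : K -> option Z) : Prop :=
  (forall x : K, v x = None <-> x = 0%R) /\
  (forall x y : K, v (x * y)%R = oZadd (v x) (v y)) /\
  (forall x y : K, oZle (oZmin (v x) (v y)) (v (x + y)%R)) /\
  (forall z : Z, exists x : K, v x = Some z).

Definition val_cauchy (K : fieldType) (v : K -> option Z) (u : nat -> K) : Prop :=
  forall N : Z, exists M : nat, forall p q : nat, (M <= p)%N -> (M <= q)%N ->
    val_ge v (u p - u q)%R N.

Definition val_converges (K : fieldType) (v : K -> option Z) (u : nat -> K) (l : K) : Prop :=
  forall N : Z, exists M : nat, forall p : nat, (M <= p)%N -> val_ge v (u p - l)%R N.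

Definition complete_dvf (K : fieldType) (v : K -> option Z) : Prop :=
  is_discrete_valuation v /\
  (forall u : nat -> K, val_cauchy v u -> exists l : K, val_converges v u l).

Inductive ER : Type := ERfin (r : R) | ERpinf | ERminf.

Definition ER_le (a b : ER) : Prop :=
  match a, b with
  | ERminf, _ => True
  | _, ERpinf => True
  | ERfin x, ERfin y => Rle x y
  | _, _ => False
  end.

Definition ER_lt (a b : ER) : Prop := ER_le a b /\ a <> b.

(* addition with +oo absorbing (inf-convolution convention) *)
Definition ER_add (a b : ER) : ER :=
  match a, b with
  | ERpinf, _ => ERpinf
  | _, ERpinf => ERpinf
  | ERminf, _ => ERminf
  | _, ERminf => ERminf
  | ERfin x, ERfin y => ERfin (Rplus x y)
  end.

(* real part, junk value 0 at infinities (only used on finite values) *)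
Definition ER_toR (a : ER) : R := match a with ERfin x => x | _ => R0 end.

Definition ER_is_lub (S : ER -> Prop) (s : ER) : Prop :=
  (forall e, S e -> ER_le e s) /\ (forall u, (forall e, S e -> ER_le e u) -> ER_le s u).

Definition ER_is_glb (S : ER -> Prop) (s : ER) : Prop :=
  (forall e, S e -> ER_le s e) /\ (forall u, (forall e, S e -> ER_le u e) -> ER_le u s).

Definition ER_sup (S : ER -> Prop) : ER := epsilon (inhabits ERpinf) (ER_is_lub S).
Definition ER_inf (S : ER -> Prop) : ER := epsilon (inhabits ERpinf) (ER_is_glb S).

Definition valER (K : fieldType) (v : K -> option Z) (x : K) : ER :=
  match v x with Some z => ERfin (IZR z) | None => ERpinf end.

(* Convex functions [0,a] -> R u {+oo}  (values outside [0,a] ignored)  *)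

Definition in_dom (a x : R) : Prop := Rle R0 x /\ Rle x a.

Definition convex_on (a : R) (f : R -> ER) : Prop :=
  (forall x, in_dom a x -> f x <> ERminf) /\
  (forall x y p q t : R, in_dom a x -> in_dom a y ->
     ER_le (f x) (ERfin p) -> ER_le (f y) (ERfin q) -> Rle R0 t -> Rle t R1 ->
     ER_le (f (Rplus (Rmult t x) (Rmult (Rminus R1 t) y)))
           (ERfin (Rplus (Rmult t p) (Rmult (Rminus R1 t) q)))).

Definition in_epi (a : R) (f : R -> ER) (x y : R) : Prop :=
  in_dom a x /\ ER_le (f x) (ERfin y).

Definition extremal_point (a : R) (f : R -> ER) (x y : R) : Prop :=
  in_epi a f x y /\
  forall x1 y1 x2 y2 t : R, in_epi a f x1 y1 -> in_epi a f x2 y2 ->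
    Rlt R0 t -> Rlt t R1 ->
    x = Rplus (Rmult t x1) (Rmult (Rminus R1 t) x2) ->
    y = Rplus (Rmult t y1) (Rmult (Rminus R1 t) y2) ->
    x1 = x2 /\ y1 = y2.

Definition piecewise_affine (a : R) (f : R -> ER) : Prop :=
  exists s : seq R, (0 < size s)%N /\ nth R0 s 0 = R0 /\ nth R0 s (size s).-1 = a /\
    forall j : nat, (j.+1 < size s)%N ->
      Rle (nth R0 s j) (nth R0 s j.+1) /\
      ((exists p q : R, forall x, Rlt (nth R0 s j) x -> Rlt x (nth R0 s j.+1) ->
           f x = ERfin (Rplus (Rmult p x) q)) \/
       (forall x, Rlt (nth R0 s j) x -> Rlt x (nth R0 s j.+1) -> f x = ERpinf)).

Definition newton_function (n : nat) (f : R -> ER) : Prop :=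
  convex_on (INR n) f /\ piecewise_affine (INR n) f /\
  (exists r : R, f (INR n) = ERfin r) /\
  (forall x y : R, extremal_point (INR n) f x y -> exists k : nat, x = INR k).

Section PolyNF.
Local Open Scope ring_scope.
Variables (K : fieldType) (v : K -> option Z).

Definition pcoef (Q : {poly K}) (i : nat) : K := Q`_i.

Definition NF (Q : {poly K}) : R -> ER :=
  let m := (size Q).-1 in
  fun x => ER_sup (fun e => exists g : R -> ER, convex_on (INR m) g /\
             (forall i : nat, (i <= m)%N -> ER_le (g (INR i)) (valER v (pcoef Q i))) /\
             e = g x).

(* "NF(Q) >= g" for Q of degree <= M:  val(q_i) >= g(i) for integers 0 <= i <= M *)
Definition NF_ge (M : nat) (Q : {poly K}) (g : R -> ER) : Prop :=
  (size Q <= M.+1)%N /\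
  forall i : nat, (i <= M)%N -> ER_le (g (INR i)) (valER v (pcoef Q i)).

Definition precision_nondeg (n : nat) (P : {poly K}) (phi : R -> ER) : Prop :=
  (forall x : R, in_dom (INR n) x -> ER_le (NF P x) (phi x)) /\
  (forall x y : R, extremal_point (INR n) (NF P) x y -> ER_lt (ERfin y) (phi x)).

End PolyNF.

(* phi (+) psi on [0,a]: greatest convex function below both *)
Definition ER_cvxmin (a : R) (f g : R -> ER) : R -> ER :=
  fun x => ER_sup (fun e => exists h : R -> ER, convex_on a h /\
             (forall y, in_dom a y -> ER_le (h y) (f y) /\ ER_le (h y) (g y)) /\
             e = h x).

(* phi (x) psi for phi on [0,a], psi on [0,b]: inf-convolution on [0,a+b] *)
Definition ER_infconv (a b : R) (f g : R -> ER) : R -> ER :=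
  fun x => ER_inf (fun e => exists y z : R, in_dom a y /\ in_dom b z /\
             Rplus y z = x /\ e = ER_add (f y) (g z)).

Definition nf_lambda (d : nat) (psi : R -> ER) : R :=
  Rminus (ER_toR (psi (INR d))) (ER_toR (psi (Rminus (INR d) R1))).

(* Delta(x) = lambda * x + Delta_const : greatest affine function of slope lambda
   below phi on [d,n] *)
Definition nf_Delta_const (n d : nat) (phi psi : R -> ER) : ER :=
  ER_sup (fun e => exists c : R,
    (forall x, Rle (INR d) x -> Rle x (INR n) ->
       ER_le (ERfin (Rplus (Rmult (nf_lambda d psi) x) c)) (phi x)) /\
    e = ERfin c).

Definition nf_delta (n d : nat) (phi psi : R -> ER) : ER :=
  ER_add (nf_Delta_const n d phi psi)
         (ERfin (Rminus (Rmult (nf_lambda d psi) (INR d)) (ER_toR (psi (INR d))))).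

Definition nf_mod (n d : nat) (phi psi : R -> ER) : R -> ER :=
  ER_cvxmin (Rminus (INR d) R1) phi (fun x => ER_add (psi x) (nf_delta n d phi psi)).

Definition nf_div (n d : nat) (phi psi : R -> ER) : R -> ER :=
  fun x => ER_add
    (ER_inf (fun e => exists h : R, Rle R0 h /\ Rle (Rplus (Rplus x (INR d)) h) (INR n) /\
        e = ER_add (phi (Rplus (Rplus x (INR d)) h)) (ERfin (Ropp (Rmult (nf_lambda d psi) h)))))
    (ERfin (Ropp (ER_toR (psi (INR d))))).

(* Main.v *)
Require Import Defs.
From Stdlib Require Import Reals ClassicalEpsilon ZArith Lra Lia Classical.
From mathcomp Require Import all_boot all_algebra zify.
Import GRing.Theory.

Lemma ER_le_refl a : ER_le a a.
Proof. case: a => //= r; apply: Rle_refl. Qed.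

Lemma ER_le_trans a b c : ER_le a b -> ER_le b c -> ER_le a c.
Proof. case: a; case: b; case: c => //= *; lra. Qed.

Lemma ER_le_total a b : ER_le a b \/ ER_le b a.
Proof. case: a; case: b => //=; try tauto. move=> r s; lra. Qed.

Lemma ER_le_antisym a b : ER_le a b -> ER_le b a -> a = b.
Proof. case: a; case: b => //= r s *; f_equal; lra. Qed.

Lemma ER_fin_between a b e : ER_le (ERfin a) e -> ER_le e (ERfin b) -> exists w, e = ERfin w.
Proof. case: e => //= r; eauto. Qed.

Lemma ER_lub_exists S : exists s, ER_is_lub S s.
Proof.
case: (classic (S ERpinf)) => HP.
  exists ERpinf; split; first by case.
  by move=> u /(_ _ HP); case: u.
pose E r := S (ERfin r).
case: (classic (exists r, E r)) => HE; last first.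
  exists ERminf; split=> //.
  case=> // r Hr; exfalso; apply: HE; by exists r.
case: (classic (bound E)) => HB.
  have [m [Hm1 Hm2]] := completeness E HB HE.
  exists (ERfin m); split.
    by case=> //= r Hr; apply: Hm1.
  case=> //=.
  - move=> b Hb; apply: Hm2 => r Hr; exact: (Hb _ Hr).
  - move=> Hb; case: HE => r Hr; exact: (Hb _ Hr).
exists ERpinf; split; first by case.
case=> //.
- move=> b Hb; exfalso; apply: HB; exists b => r Hr; exact: (Hb _ Hr).
- move=> Hb; case: HE => r Hr; exact: (Hb _ Hr).
Qed.

Lemma ER_sup_spec S : ER_is_lub S (ER_sup S).
Proof. rewrite /ER_sup; apply: epsilon_spec; exact: ER_lub_exists. Qed.

Lemma ER_sup_ub S e : S e -> ER_le e (ER_sup S).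
Proof. by case: (ER_sup_spec S) => H _; apply: H. Qed.

Lemma ER_sup_least S u : (forall e, S e -> ER_le e u) -> ER_le (ER_sup S) u.
Proof. by case: (ER_sup_spec S) => _ H; apply: H. Qed.

Definition ER_neg a := match a with ERfin r => ERfin (- r) | ERpinf => ERminf | ERminf => ERpinf end.
Lemma ER_negK a : ER_neg (ER_neg a) = a.
Proof. by case: a => //= r; rewrite Ropp_involutive. Qed.
Lemma ER_le_neg a b : ER_le (ER_neg a) (ER_neg b) <-> ER_le b a.
Proof. case: a; case: b => //= *; split; lra. Qed.

Lemma ER_glb_exists S : exists s, ER_is_glb S s.
Proof.
have [s [H1 H2]] := ER_lub_exists (fun e => S (ER_neg e)).
exists (ER_neg s); split.
  move=> e He; rewrite -(ER_negK e); apply/ER_le_neg; apply: H1; by rewrite ER_negK.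
move=> u Hu; rewrite -(ER_negK u); apply/ER_le_neg; apply: H2 => e He.
rewrite -{1}(ER_negK e); apply/ER_le_neg; exact: Hu.
Qed.

Lemma ER_inf_spec S : ER_is_glb S (ER_inf S).
Proof. rewrite /ER_inf; apply: epsilon_spec; exact: ER_glb_exists. Qed.

Lemma ER_inf_lb S e : S e -> ER_le (ER_inf S) e.
Proof. by case: (ER_inf_spec S) => H _; apply: H. Qed.

Lemma ER_inf_greatest S u : (forall e, S e -> ER_le u e) -> ER_le u (ER_inf S).
Proof. by case: (ER_inf_spec S) => _ H; apply: H. Qed.

Lemma ER_add_mono a b a' b' : ER_le a a' -> ER_le b b' -> ER_le (ER_add a b) (ER_add a' b').
Proof. case: a; case: b; case: a'; case: b' => //= *; lra. Qed.

Lemma ER_add_comm a b : ER_add a b = ER_add b a.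
Proof. case: a; case: b => //= *; by rewrite Rplus_comm. Qed.

Lemma ER_add_fin0 a : ER_add a (ERfin 0) = a.
Proof. case: a => //= r; by rewrite Rplus_0_r. Qed.

Lemma ER_add_finA a x y : ER_add (ER_add a (ERfin x)) (ERfin y) = ER_add a (ERfin (x + y)).
Proof. case: a => //= r; by rewrite Rplus_assoc. Qed.

Lemma ER_shiftR a b c : ER_le (ER_add a (ERfin c)) b -> ER_le a (ER_add b (ERfin (- c))).
Proof. case: a; case: b => //= *; lra. Qed.

Lemma ER_shiftL a b c : ER_le a (ER_add b (ERfin (- c))) -> ER_le (ER_add a (ERfin c)) b.
Proof. case: a; case: b => //= *; lra. Qed.

Set Implicit Arguments.

Lemma v0 (K : fieldType) (v : K -> option Z) (Hv : is_discrete_valuation v) : v 0%R = None.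
Proof. by case: Hv => [H _]; apply/H. Qed.

Lemma vnz (K : fieldType) (v : K -> option Z) (Hv : is_discrete_valuation v) x :
  x <> 0%R -> exists z, v x = Some z.
Proof.
case: Hv => [H _] Hx; case E: (v x) => [z|]; first by eauto.
by exfalso; apply: Hx; apply/H.
Qed.

Lemma v1 (K : fieldType) (v : K -> option Z) (Hv : is_discrete_valuation v) : v 1%R = Some Z0.
Proof.
have Hn1 : (1 : K)%R <> 0%R by apply/eqP; exact: oner_neq0.
have [z Hz] := vnz Hv Hn1.
case: (Hv) => _ [Hm _]; have := Hm 1%R 1%R; rewrite mulr1 Hz /= => [[H]]; f_equal; lia.
Qed.

Lemma vopp (K : fieldType) (v : K -> option Z) (Hv : is_discrete_valuation v) x : v (- x)%R = v x.
Proof.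
have Hn1 : (-1 : K)%R <> 0%R by apply/eqP; rewrite oppr_eq0 oner_eq0.
have [z Hz] := vnz Hv Hn1.
case: (Hv) => _ [Hm _].
have := Hm (-1)%R (-1)%R; rewrite mulrNN mulr1 Hz (v1 Hv) /= => [[Hz0]].
have Ez : z = Z0 by lia.
rewrite -mulN1r Hm Hz Ez; by case: (v x).
Qed.

Lemma valER_mul (K : fieldType) (v : K -> option Z) (Hv : is_discrete_valuation v) x y :
  valER v (x * y)%R = ER_add (valER v x) (valER v y).
Proof.
case: (Hv) => _ [Hm _]; rewrite /valER Hm.
case: (v x) => [a|]; case: (v y) => [b|] //=; by rewrite plus_IZR.
Qed.

Lemma valER_opp (K : fieldType) (v : K -> option Z) (Hv : is_discrete_valuation v) x :
  valER v (- x)%R = valER v x.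
Proof. by rewrite /valER vopp. Qed.

Lemma valER_0 (K : fieldType) (v : K -> option Z) (Hv : is_discrete_valuation v) :
  valER v 0%R = ERpinf.
Proof. by rewrite /valER v0. Qed.

Lemma valER_nminf (K : fieldType) (v : K -> option Z) x : valER v x <> ERminf.
Proof. by rewrite /valER; case: (v x). Qed.

Lemma valER_add (K : fieldType) (v : K -> option Z) (Hv : is_discrete_valuation v) e x y :
  ER_le e (valER v x) -> ER_le e (valER v y) -> ER_le e (valER v (x + y)%R).
Proof.
case: (Hv) => _ [_ [Ha _]]; have := Ha x y; rewrite /valER.
case: (v x) => [a|]; case: (v y) => [b|]; case: (v (x+y)%R) => [c|] //=;
  case: e => //= r H H1 H2.
- case: (Z.min_spec a b) => [[_ E]|[_ E]]; rewrite E in H;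
  [apply: Rle_trans H1 (IZR_le _ _ H) | apply: Rle_trans H2 (IZR_le _ _ H)].
- apply: Rle_trans H1 (IZR_le _ _ H).
- apply: Rle_trans H2 (IZR_le _ _ H).
Qed.

Lemma valER_sub (K : fieldType) (v : K -> option Z) (Hv : is_discrete_valuation v) e x y :
  ER_le e (valER v x) -> ER_le e (valER v y) -> ER_le e (valER v (x - y)%R).
Proof. move=> H1 H2; apply: valER_add => //; by rewrite valER_opp. Qed.

Lemma valER_sum (K : fieldType) (v : K -> option Z) (Hv : is_discrete_valuation v) e
  (I : Type) (r : seq I) (P : pred I) (F : I -> K) :
  (forall i, P i -> ER_le e (valER v (F i))) -> ER_le e (valER v (\sum_(i <- r | P i) F i)%R).
Proof.
move=> H; apply: (big_ind (fun x => ER_le e (valER v x))) => //.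
- rewrite valER_0 //; by clear H; case: e.
- move=> x y; exact: valER_add.
Qed.

Lemma valER_strict (K : fieldType) (v : K -> option Z) (Hv : is_discrete_valuation v) x y a :
  valER v x = ERfin a -> ER_lt (ERfin a) (valER v y) -> valER v (x + y)%R = ERfin a.
Proof.
case: (Hv) => _ [_ [Ha _]].
have Hb := Ha (x + y)%R (- y)%R; rewrite addrK (vopp Hv) in Hb.
have Hc := Ha x y.
rewrite /valER; case Ex: (v x) => [z|] // [<-]; case Ey: (v y) => [w|]; last first.
  case: Hv => [H0 _]; have -> : y = 0%R by apply/H0.
  by rewrite addr0 Ex.
rewrite Ex Ey /= in Hb Hc *; case=> Hl Hne.
have Hwz : Z.lt z w.
  have := le_IZR _ _ Hl; move=> H; have : z <> w by move=> E; apply: Hne; rewrite E.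
  lia.
case: (v (x + y)%R) Hb Hc => [c|] //= Hb Hc; f_equal; f_equal.
rewrite Z.min_l in Hc; last lia.
case: (Z.min_spec c w) Hb => [[_ E]|[_ E]] Hb; rewrite ?E in Hb.
- lia.
- exfalso; apply: (Z.lt_irrefl w); apply: Z.le_lt_trans Hb Hwz.
- exfalso; lia.
Qed.

Lemma div_identity (Rg : comRingType) (X A dA q b r q' b' r' db : Rg) :
  X = (A + dA)%R -> b' = (b + db)%R -> X = (q' * b' + r')%R -> A = (q * b + r)%R ->
  (dA - q * db)%R = ((q' - q) * b' + (r' - r))%R.
Proof.
move=> HX Hb' E1 E2.
have HdA : dA = (X - A)%R by rewrite HX addrC addKr.
rewrite HdA E1 E2 Hb' mulrBl [(q * (b + db))%R]mulrDr !opprD.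
rewrite [RHS]addrACA -[LHS]addrA; f_equal.
by rewrite addrAC.
Qed.

Local Open Scope R_scope.

Lemma NF_le_val (K : fieldType) (v : K -> option Z) (P : {poly K}) i :
  (i <= (size P).-1)%N -> ER_le (NF v P (INR i)) (valER v (pcoef P i)).
Proof.
move=> Hi; apply: ER_sup_least => e [g [_ [Hg ->]]]; exact: Hg.
Qed.

Lemma NF_member (K : fieldType) (v : K -> option Z) (P : {poly K}) g x :
  convex_on (INR (size P).-1) g ->
  (forall i, (i <= (size P).-1)%N -> ER_le (g (INR i)) (valER v (pcoef P i))) ->
  ER_le (g x) (NF v P x).
Proof. move=> H1 H2; apply: ER_sup_ub; exists g; split => //. Qed.

Lemma NF_convex (K : fieldType) (v : K -> option Z) (P : {poly K}) x y p q t :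
  in_dom (INR (size P).-1) x -> in_dom (INR (size P).-1) y ->
  ER_le (NF v P x) (ERfin p) -> ER_le (NF v P y) (ERfin q) -> Rle 0 t -> Rle t 1 ->
  ER_le (NF v P (t * x + (1 - t) * y)) (ERfin (t * p + (1 - t) * q)).
Proof.
move=> Hx Hy Hp Hq Ht0 Ht1; apply: ER_sup_least => e [g [Hc [Hgb ->]]].
have Hc0 := Hc; case: Hc0 => _ Hg.
apply: Hg => //.
- apply: ER_le_trans Hp; exact: NF_member.
- apply: ER_le_trans Hq; exact: NF_member.
Qed.

Lemma affine_convex a al be : convex_on a (fun x => ERfin (al + be * x)).
Proof.
split => // x y p q t _ _ /= Hp Hq Ht0 Ht1.
have H1 : t * (al + be * x) <= t * p by apply: Rmult_le_compat_l.
have H2 : (1 - t) * (al + be * y) <= (1 - t) * q by apply: Rmult_le_compat_l; lra.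
nra.
Qed.

Lemma INR_subn m k : (k <= m)%N -> INR (m - k) = INR m - INR k.
Proof. move=> H; rewrite -minus_INR; [by [] | by apply/leP]. Qed.

Lemma INR_addn m k : INR (m + k) = INR m + INR k.
Proof. by rewrite -plus_INR. Qed.

Lemma INR_ltS1 i d : (i < d)%N -> INR i + 1 <= INR d.
Proof. move=> H; rewrite -S_INR; apply: le_INR; apply/leP; exact: H. Qed.

Lemma valER_lb (K : fieldType) (v : K -> option Z) x : exists M, ER_le (ERfin M) (valER v x).
Proof. rewrite /valER; case: (v x) => [z|]; [exists (IZR z); apply: Rle_refl | by exists 0]. Qed.

Lemma valER_lb_seq (K : fieldType) (v : K -> option Z) (f : nat -> K) N :
  exists M, forall i, (i <= N)%N -> ER_le (ERfin M) (valER v (f i)).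
Proof.
elim: N => [|N [M HM]].
  have [M HM] := valER_lb _ v (f 0%N); exists M => i; rewrite leqn0 => /eqP ->; exact: HM.
have [M' HM'] := valER_lb _ v (f N.+1); exists (Rmin M M') => i; rewrite leq_eqVlt ltnS.
case/orP => [/eqP ->|Hi].
  apply: ER_le_trans HM'; apply: Rmin_r.
apply: ER_le_trans (HM _ Hi); apply: Rmin_l.
Qed.

Lemma B_struct (K : fieldType) (v : K -> option Z) (Hv : is_discrete_valuation v)
  (B : {poly K}) d (HdegB : size B = d.+1) (Hd1 : (1 <= d)%N)
  (HBlow : exists i : nat, (i < d)%N /\ pcoef B i <> 0%R) :
  exists vd w, valER v (pcoef B d) = ERfin vd /\ NF v B (INR d) = ERfin vd /\
    NF v B (INR d - 1) = ERfin w /\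
    (forall j, (j <= d)%N -> ER_le (ERfin (vd - (vd - w) * (INR d - INR j))) (valER v (pcoef B j))) /\
    (forall x, ER_le (ERfin (vd - (vd - w) * (INR d - x))) (NF v B x)).
Proof.
have Hsz : (size B).-1 = d by rewrite HdegB.
have Hlc : pcoef B d <> 0%R.
  rewrite /pcoef -Hsz -lead_coefE; apply/eqP; rewrite lead_coef_eq0 -size_poly_eq0 HdegB //.
have [z Hz] := vnz Hv Hlc.
set vd := IZR z.
have Hvd : valER v (pcoef B d) = ERfin vd by rewrite /valER Hz.
have [M HM] := valER_lb_seq _ v (pcoef B) d.
set s := Rmax 0 (vd - M).
have Hs0 : 0 <= s by apply: Rmax_l.
have Hs1 : vd - M <= s by apply: Rmax_r.
pose g0 := fun x => ERfin ((vd - s * INR d) + s * x).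
have Hg0 : forall x, ER_le (g0 x) (NF v B x).
  move=> x; apply: NF_member; first exact: affine_convex.
  rewrite Hsz => i Hi; rewrite /g0.
  case: (ltnP i d) => Hid.
    apply: ER_le_trans (HM _ Hi) => /=.
    have := INR_ltS1 _ _ Hid; nra.
  have -> : i = d by apply/eqP; rewrite eqn_leq Hi Hid.
  rewrite Hvd /=; lra.
have HNd : NF v B (INR d) = ERfin vd.
  apply: ER_le_antisym.
    rewrite -Hvd; apply: NF_le_val; by rewrite Hsz.
  have := Hg0 (INR d); rewrite /g0; congr ER_le; congr ERfin; ring.
have HNi : forall i r, (i < d)%N -> valER v (pcoef B i) = ERfin r ->
    ER_le (NF v B (INR d - 1)) (ERfin (vd + (r - vd) / (INR d - INR i))).
  move=> i r Hid Hr.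
  have HD := INR_ltS1 _ _ Hid.
  have Hi0 := pos_INR i.
  set t := 1 / (INR d - INR i).
  have Ht0 : 0 <= t by rewrite /t; apply: Rlt_le; apply: Rdiv_lt_0_compat; lra.
  have Ht1 : t <= 1.
    rewrite /t; apply: (Rmult_le_reg_r (INR d - INR i)); first lra.
    rewrite /Rdiv Rmult_1_l Rinv_l; lra.
  have Hdom : forall k, (k <= d)%N -> in_dom (INR (size B).-1) (INR k).
    move=> k Hk; rewrite Hsz; split; [exact: pos_INR | apply: le_INR; exact/leP].
  have := @NF_convex _ v B (INR i) (INR d) r vd t
     (Hdom _ (ltnW Hid)) (Hdom _ (leqnn d)).
  have -> : t * INR i + (1 - t) * INR d = INR d - 1.
    rewrite /t; field; lra.
  have -> : t * r + (1 - t) * vd = vd + (r - vd) / (INR d - INR i).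
    rewrite /t; field; lra.
  apply.
  - rewrite -Hr; apply: NF_le_val; rewrite Hsz; exact: ltnW.
  - rewrite HNd; apply: Rle_refl.
  - done.
  - done.
have [w Hw] : exists w, NF v B (INR d - 1) = ERfin w.
  case: HBlow => i0 [Hi0 Hnz].
  have [z0 Hz0] := vnz Hv Hnz.
  have Hr0 : valER v (pcoef B i0) = ERfin (IZR z0) by rewrite /valER Hz0.
  apply: (@ER_fin_between (vd - s) _ _ _ (HNi _ _ Hi0 Hr0)).
  have := Hg0 (INR d - 1); rewrite /g0; apply: ER_le_trans => /=; lra.
have Hj : forall j, (j <= d)%N -> ER_le (ERfin (vd - (vd - w) * (INR d - INR j))) (valER v (pcoef B j)).
  move=> j Hjd; case: (ltnP j d) => Hjlt; last first.
    have -> : j = d by apply/eqP; rewrite eqn_leq Hjd Hjlt.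
    rewrite Hvd /=; lra.
  case Er: (valER v (pcoef B j)) => [r||] //=.
    have := HNi _ _ Hjlt Er; rewrite Hw /= => Hle.
    have HD := INR_ltS1 _ _ Hjlt.
    have Hi0 := pos_INR j.
    have : (w - vd) * (INR d - INR j) <= (r - vd).
      have -> : r - vd = (r - vd) / (INR d - INR j) * (INR d - INR j) by field; lra.
      apply: Rmult_le_compat_r; lra.
    nra.
  by move: (valER_nminf _ v (pcoef B j)); rewrite Er.
exists vd, w; do 4!(split => //).
move=> x.
pose gL := fun x => ERfin ((vd - (vd - w) * INR d) + (vd - w) * x).
have : ER_le (gL x) (NF v B x).
  apply: NF_member; first exact: affine_convex.
  rewrite Hsz => i Hi; have := Hj _ Hi; rewrite /gL; apply: ER_le_trans => /=; lra.
rewrite /gL; apply: ER_le_trans => /=; lra.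
Qed.

Definition Gset (n d : nat) (f : R -> ER) (lam : R) (k : nat) : ER -> Prop :=
  fun e => exists h : R, Rle R0 h /\ Rle (Rplus (Rplus (INR k) (INR d)) h) (INR n) /\
        e = ER_add (f (Rplus (Rplus (INR k) (INR d)) h)) (ERfin (Ropp (Rmult lam h))).

Lemma G_shift n d f lam k j : (k <= j)%N ->
  ER_le (ER_inf (Gset n d f lam k)) (ER_add (ER_inf (Gset n d f lam j)) (ERfin (- (lam * (INR j - INR k))))).
Proof.
move=> Hkj; rewrite -[X in ERfin (- X)]Ropp_involutive.
apply: ER_shiftR; apply: ER_inf_greatest => e [h [Hh0 [Hhn ->]]].
apply: ER_shiftL; rewrite Ropp_involutive ER_add_finA.
apply: ER_inf_lb; exists (h + (INR j - INR k)).
have Hjk : INR k <= INR j by apply: le_INR; apply/leP.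
have -> : INR k + INR d + (h + (INR j - INR k)) = INR j + INR d + h by ring.
split; first lra; split; first lra.
congr ER_add; congr ERfin; ring.
Qed.

Lemma G_h0 n d f lam k : (k + d <= n)%N ->
  ER_le (ER_inf (Gset n d f lam k)) (f (INR (k + d))).
Proof.
move=> H; rewrite -[f _]ER_add_fin0; apply: ER_inf_lb; exists 0.
have Hn : INR k + INR d <= INR n by rewrite -INR_addn; apply: le_INR; apply/leP.
split; first lra; split; first lra.
rewrite INR_addn Rplus_0_r; congr ER_add; congr ERfin; ring.
Qed.

Lemma quot_bound (K : fieldType) (v : K -> option Z) (Hv : is_discrete_valuation v)
  (f : R -> ER) (P Bp : {poly K}) (n d : nat) (vd lam : R)
  (Hdn : (d <= n)%N) (HszB : size Bp = d.+1)
  (Hlead : valER v (pcoef Bp d) = ERfin vd)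
  (HBj : forall j, (j <= d)%N -> ER_le (ERfin (vd - lam * (INR d - INR j))) (valER v (pcoef Bp j)))
  (HszP : (size P <= n.+1)%N)
  (HP : forall i, (i <= n)%N -> ER_le (f (INR i)) (valER v (pcoef P i))) :
  forall k, (k <= n - d)%N ->
    ER_le (ER_add (ER_inf (Gset n d f lam k)) (ERfin (- vd))) (valER v (pcoef (P %/ Bp)%R k)).
Proof.
set Qd := (P %/ Bp)%R.
have HB0 : Bp != 0%R by rewrite -size_poly_eq0 HszB.
have HszQ : (size Qd <= (n - d).+1)%N.
  rewrite /Qd size_divp // HszB /=; apply: leq_trans (leq_sub2r d HszP) _; lia.
have HszR : (size (P %% Bp)%R <= d)%N by rewrite -ltnS -HszB ltn_modp.
suff H : forall t k, (n - d < k + t)%N -> (k <= n - d)%N ->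
    ER_le (ER_add (ER_inf (Gset n d f lam k)) (ERfin (- vd))) (valER v (pcoef Qd k)).
  move=> k Hk; apply: (H (n - d).+1) => //; lia.
elim=> [|t IH] k Hkt Hk; first lia.
have Hid : pcoef P (k + d) = ((Qd * Bp)`_(k + d))%R.
  rewrite /pcoef {1}(divp_eq P Bp) coefD.
  rewrite [X in (_ + X)%R]nth_default ?addr0 //; exact: leq_trans HszR (leq_addl k d).
have Hk0 : (k < (k + d).+1)%N by lia.
rewrite coefM (bigD1 (Ordinal Hk0)) //= addKn in Hid.
have Hqk : (Qd`_k * Bp`_d = pcoef P (k + d) - \sum_(i < (k + d).+1 | i != Ordinal Hk0) Qd`_i * Bp`_(k + d - i))%R.
  by rewrite Hid addrK.
have Hmain : ER_le (ER_inf (Gset n d f lam k)) (valER v (Qd`_k * Bp`_d)%R).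
  rewrite Hqk; apply: valER_sub => //.
    have H1 : (k + d <= n)%N by lia.
    exact: ER_le_trans (@G_h0 n d f lam k H1) (HP (k + d)%N H1).
  apply: valER_sum => // [[j Hj]] /= Hjk.
  have Hjk' : j <> k by move: Hjk; rewrite -val_eqE /= => /eqP.
  case: (ltnP j k) => Hjlt.
    rewrite [(Bp`_ _)%R]nth_default; last by rewrite HszB; lia.
    by rewrite mulr0 valER_0 //; case: (ER_inf _).
  case: (leqP j (n - d)) => Hjn; last first.
    rewrite [(Qd`_ _)%R]nth_default; last exact: leq_trans HszQ Hjn.
    by rewrite mul0r valER_0 //; case: (ER_inf _).
  have Hkj : (k < j)%N by lia.
  have IHj := IH j ltac:(lia) Hjn.
  rewrite valER_mul //.
  have HBj' := HBj (k + d - j)%N ltac:(lia).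
  apply: ER_le_trans (G_shift n d f lam k j (ltnW Hkj)) _.
  apply: ER_le_trans (ER_add_mono _ _ _ _ IHj HBj').
  rewrite ER_add_finA.
  have -> : - vd + (vd - lam * (INR d - INR (k + d - j))) = - (lam * (INR j - INR k)).
    rewrite INR_subn; last exact: Hj.
    rewrite INR_addn; ring.
  exact: ER_le_refl.
rewrite valER_mul // [valER v (Bp`_d)%R]Hlead in Hmain.
apply: ER_shiftL; rewrite Ropp_involutive; exact: Hmain.
Qed.



Lemma cvxmin_le a f g x : in_dom a x ->
  ER_le (ER_cvxmin a f g x) (f x) /\ ER_le (ER_cvxmin a f g x) (g x).
Proof.
move=> Hx; split; apply: ER_sup_least => e [h [_ [Hh ->]]]; by case: (Hh x Hx).
Qed.

Lemma nf_div_eq n d f psi k : nf_div n d f psi (INR k) =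
  ER_add (ER_inf (Gset n d f (nf_lambda d psi) k)) (ERfin (- ER_toR (psi (INR d)))).
Proof. by []. Qed.

Lemma ER_lt_le_trans a b c : ER_lt a b -> ER_le b c -> ER_lt a c.
Proof.
case=> H1 H2 H3; split; first exact: ER_le_trans H1 H3.
move=> E; subst c; apply: H2; exact: ER_le_antisym.
Qed.

Lemma size_eq_of (K : fieldType) (p : {poly K}) d :
  (size p <= d.+1)%N -> (p`_d)%R <> 0%R -> size p = d.+1.
Proof.
move=> H1 H2; apply/eqP; rewrite eqn_leq H1 /=; rewrite ltnNge; apply/negP => H3.
by apply: H2; apply: nth_default.
Qed.

Lemma in_dom_nat a i : (i <= a)%N -> in_dom (INR a) (INR i).
Proof. move=> H; split; [exact: pos_INR | apply: le_INR; exact/leP]. Qed.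

Lemma Delta_line n d phi psi x : INR d <= x -> x <= INR n ->
  ER_le (ER_add (nf_Delta_const n d phi psi) (ERfin (nf_lambda d psi * x))) (phi x).
Proof.
move=> H1 H2; apply: ER_shiftL; apply: ER_sup_least => e [c [Hc ->]].
apply: ER_shiftR; have := Hc x H1 H2; by rewrite /= Rplus_comm.
Qed.

Lemma G_Delta n d phi psi k :
  ER_le (ER_add (nf_Delta_const n d phi psi) (ERfin (nf_lambda d psi * (INR k + INR d))))
        (ER_inf (Gset n d phi (nf_lambda d psi) k)).
Proof.
apply: ER_inf_greatest => e [h [Hh0 [Hhn ->]]].
have Hk := pos_INR k.
have H := @Delta_line n d phi psi (INR k + INR d + h) ltac:(lra) Hhn.
apply: ER_le_trans (ER_add_mono _ _ _ _ H (ER_le_refl (ERfin (- (nf_lambda d psi * h))))).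
rewrite ER_add_finA.
have -> : nf_lambda d psi * (INR k + INR d + h) + - (nf_lambda d psi * h) =
          nf_lambda d psi * (INR k + INR d) by ring.
exact: ER_le_refl.
Qed.

Lemma psi_step (K : fieldType) (v : K -> option Z) (B : {poly K}) d vd lam i k r :
  size B = d.+1 -> NF v B (INR d) = ERfin vd -> (k <= i)%N -> (i < d)%N ->
  (forall x, ER_le (ERfin (vd - lam * (INR d - x))) (NF v B x)) ->
  ER_le (NF v B (INR (i - k))) (ERfin r) -> ER_le (NF v B (INR i)) (ERfin (r + lam * INR k)).
Proof.
move=> Hsz Hd Hki Hid HL Hr.
have Hsz' : (size B).-1 = d by rewrite Hsz.
case: (posnP k) => Hk0.
  rewrite Hk0 subn0 in Hr *; apply: (ER_le_trans _ _ _ Hr); rewrite /= Rmult_0_r Rplus_0_r; apply: Rle_refl.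
have HL' := ER_le_trans _ _ _ (HL (INR (i - k))) Hr; rewrite /= INR_subn // in HL'.
rewrite INR_subn // in Hr.
have Hik := INR_ltS1 _ _ Hid.
have Hk1 : 1 <= INR k by change 1 with (INR 1); apply: le_INR; apply/leP.
have Hk2 : INR k <= INR i by apply: le_INR; apply/leP.
set D := INR d - INR i + INR k.
have HD : 0 < D by rewrite /D; lra.
set t := (INR d - INR i) / D.
have Ht0 : 0 <= t by rewrite /t; apply: Rmult_le_pos; [lra | apply: Rlt_le; apply: Rinv_0_lt_compat].
have Ht1 : t <= 1.
  rewrite /t; apply: (Rmult_le_reg_r D) => //.
  rewrite /Rdiv Rmult_assoc Rinv_l; rewrite /D; lra; lra.
have Hdom1 : in_dom (INR (size B).-1) (INR i - INR k).
  rewrite Hsz'; split; lra.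
have Hdom2 : in_dom (INR (size B).-1) (INR d).
  rewrite Hsz'; split; [exact: pos_INR | lra].
have := @NF_convex _ v B (INR i - INR k) (INR d) r vd t Hdom1 Hdom2 Hr.
have -> : t * (INR i - INR k) + (1 - t) * INR d = INR i by rewrite /t /D; field; lra.
rewrite Hd => H; have := H (Rle_refl _) Ht0 Ht1.
move=> H3; apply: (ER_le_trans _ _ _ H3); rewrite /=.
have E : t * r + (1 - t) * vd - (r + lam * INR k) = (INR k / D) * (vd - r - lam * D).
  rewrite /t /D; field; lra.
have Hpos : 0 <= INR k / D by apply: Rmult_le_pos; [lra | apply: Rlt_le; apply: Rinv_0_lt_compat].
have Hneg : vd - r - lam * D <= 0 by rewrite /D; lra.
nra.
Qed.

Lemma prop_aux (K : fieldType) (v : K -> option Z) (Hv : complete_dvf v)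
  (Aapp Bapp : {poly K}) (n d : nat)
  (HdegA : size Aapp = n.+1) (HdegB : size Bapp = d.+1)
  (Hd1 : (1 <= d)%N) (Hdn : (d <= n)%N)
  (HBlow : exists i : nat, (i < d)%N /\ pcoef Bapp i <> 0%R)
  (phiA phiB : R -> ER)
  (HphiA : newton_function n phiA) (HphiB : newton_function d phiB)
  (HndA : precision_nondeg v n Aapp phiA) (HndB : precision_nondeg v d Bapp phiB) :
  let phi := ER_cvxmin (INR n) phiA
               (ER_infconv (INR d) (INR (n - d)) phiB
                  (nf_div n d (NF v Aapp) (NF v Bapp))) in
  let Qapp := (Aapp %/ Bapp)%R in
  let Rapp := (Aapp %% Bapp)%R in
  forall dA dB : {poly K},
    (size dA <= n.+1)%N -> (size dB <= d.+1)%N ->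
    NF_ge v n dA phiA -> NF_ge v d dB phiB ->
    let Q := ((Aapp + dA) %/ (Bapp + dB))%R in
    let Rm := ((Aapp + dA) %% (Bapp + dB))%R in
    NF_ge v (n - d) (Q - Qapp)%R (nf_div n d phi (NF v Bapp)) /\
    NF_ge v d.-1 (Rm - Rapp)%R (nf_mod n d phi (NF v Bapp)).
Proof.
move=> phi Qapp Rapp dA dB HszdA HszdB [_ HdA] [_ HdB] Q Rm.
have Hv' : is_discrete_valuation v by case: Hv.
have [vd [w [Hvd [HNd [HNd1 [HBj HNL]]]]]] := @B_struct _ v Hv' Bapp d HdegB Hd1 HBlow.
set lam := nf_lambda d (NF v Bapp).
have Hlam : lam = vd - w by rewrite /lam /nf_lambda HNd HNd1.
have Hdiv : forall f k, nf_div n d f (NF v Bapp) (INR k) = ER_add (ER_inf (Gset n d f lam k)) (ERfin (- vd)).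
  by move=> f k; rewrite nf_div_eq HNd.
have HBj' : forall j, (j <= d)%N -> ER_le (ERfin (vd - lam * (INR d - INR j))) (valER v (pcoef Bapp j)).
  by rewrite Hlam.
have HNL' : forall x, ER_le (ERfin (vd - lam * (INR d - x))) ((NF v Bapp) x).
  by rewrite Hlam.
have HszB1 : (size Bapp).-1 = d by rewrite HdegB.
have HszA1 : (size Aapp).-1 = n by rewrite HdegA.
have Hext : extremal_point (INR d) (NF v Bapp) (INR d) vd.
  split.
    split; first exact: in_dom_nat.
    rewrite HNd; exact: Rle_refl.
  move=> x1 y1 x2 y2 t [[Hx10 Hx11] Hy1] [[Hx20 Hx21] Hy2] Ht0 Ht1 Ex Ey.
  have E1 : x1 = INR d by nra.
  have E2 : x2 = INR d by nra.
  subst x1 x2; rewrite HNd /= in Hy1 Hy2.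
  split=> //; nra.
have Hlt : ER_lt (ERfin vd) (valER v (pcoef dB d)).
  apply: ER_lt_le_trans (HndB.2 _ _ Hext) (HdB _ (leqnn d)).
set Bp := (Bapp + dB)%R.
have HvBd : valER v (pcoef Bp d) = ERfin vd.
  by rewrite /pcoef /Bp coefD; apply: valER_strict.
have HszBp : size Bp = d.+1.
  apply: size_eq_of.
    rewrite /Bp; apply: leq_trans (size_polyD _ _) _; rewrite geq_max HdegB leqnn; exact: HszdB.
  by move=> E; move: HvBd; rewrite /pcoef E valER_0.
have HpsiphiB : forall j, (j <= d)%N -> ER_le ((NF v Bapp) (INR j)) (valER v (pcoef dB j)).
  move=> j Hj; have H1 := HndB.1 (INR j) (in_dom_nat _ _ Hj); exact: (ER_le_trans _ _ _ H1 (HdB _ Hj)).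
have HBpL : forall j, (j <= d)%N -> ER_le (ERfin (vd - lam * (INR d - INR j))) (valER v (pcoef Bp j)).
  move=> j Hj; rewrite /pcoef /Bp coefD; apply: valER_add => //; first exact: HBj'.
  exact: (ER_le_trans _ _ _ (HNL' _) (HpsiphiB _ Hj)).
have HBppsi : forall j, (j <= d)%N -> ER_le ((NF v Bapp) (INR j)) (valER v (pcoef Bp j)).
  move=> j Hj; rewrite /pcoef /Bp coefD; apply: valER_add => //; last exact: HpsiphiB.
  apply: NF_le_val; by rewrite HszB1.
have HszQapp : (size Qapp <= (n - d).+1)%N.
  rewrite /Qapp size_divp; last by rewrite -size_poly_eq0 HdegB.
  rewrite HdegA HdegB /=; lia.
have HQapp : forall k, (k <= n - d)%N ->
    ER_le (nf_div n d (NF v Aapp) (NF v Bapp) (INR k)) (valER v (pcoef Qapp k)).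
  move=> k Hk; rewrite Hdiv.
  apply: (@quot_bound _ v Hv' (NF v Aapp) Aapp Bapp n d vd lam Hdn HdegB Hvd HBj') => //.
    by rewrite HdegA.
  move=> i Hi; apply: NF_le_val; by rewrite HszA1.
have Hphi : forall i, (i <= n)%N -> ER_le (phi (INR i)) (phiA (INR i)) /\
    ER_le (phi (INR i)) (ER_infconv (INR d) (INR (n - d)) phiB
                  (nf_div n d (NF v Aapp) (NF v Bapp)) (INR i)).
  move=> i Hi; apply: cvxmin_le; exact: in_dom_nat.
set P := (dA - Qapp * dB)%R.
have HszP : (size P <= n.+1)%N.
  rewrite /P; apply: leq_trans (size_polyD _ _) _; rewrite size_polyN geq_max HszdA /=.
  apply: leq_trans (size_polyMleq _ _) _.
  rewrite -subn1 leq_subLR; apply: leq_trans (leq_add HszQapp HszdB) _; lia.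
have HPv : forall i, (i <= n)%N -> ER_le (phi (INR i)) (valER v (pcoef P i)).
  move=> i Hi; rewrite /pcoef /P coefB; apply: valER_sub => //.
    exact: (ER_le_trans _ _ _ (Hphi i Hi).1 (HdA i Hi)).
  rewrite coefM; apply: valER_sum => // [[k Hk]] _ /=.
  case: (leqP k (n - d)) => Hkn; last first.
    rewrite [(Qapp`_k)%R]nth_default; last exact: leq_trans HszQapp Hkn.
    by rewrite mul0r valER_0 //; case: (phi _).
  case: (leqP (i - k) d) => Hikd; last first.
    rewrite [(dB`_(i - k))%R]nth_default; last exact: leq_trans HszdB Hikd.
    by rewrite mulr0 valER_0 //; case: (phi _).
  apply: (ER_le_trans _ _ _ (Hphi i Hi).2).
  rewrite valER_mul // ER_add_comm.
  apply: (ER_le_trans _ _ _ _ (ER_add_mono _ _ _ _ (HdB _ Hikd) (HQapp _ Hkn))).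
  apply: ER_inf_lb; exists (INR (i - k)), (INR k).
  split; first exact: in_dom_nat.
  split; first exact: in_dom_nat.
  split=> //; rewrite INR_subn; [ring | exact: Hk].
have HB0 : Bp != 0%R by rewrite -size_poly_eq0 HszBp.
have Hid : P = ((Q - Qapp) * Bp + (Rm - Rapp))%R.
  apply: (@div_identity _ (Aapp + dA)%R Aapp dA Qapp Bapp Rapp Q Bp Rm dB) => //.
    exact: divp_eq.
  exact: divp_eq.
have HszRd : (size (Rm - Rapp)%R < size Bp)%N.
  apply: leq_ltn_trans (size_polyD _ _) _; rewrite size_polyN gtn_max.
  rewrite /Rm ltn_modp HB0 /= HszBp -HdegB /Rapp ltn_modp -size_poly_eq0 HdegB //.
have HQd : (P %/ Bp)%R = (Q - Qapp)%R by rewrite Hid divp_addl_mul_small.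
have HRd : (Rm - Rapp)%R = (P - (Q - Qapp) * Bp)%R by rewrite Hid addrAC subrr add0r.
have HszQd : (size (Q - Qapp)%R <= (n - d).+1)%N.
  rewrite -HQd size_divp // HszBp /=; apply: leq_trans (leq_sub2r d HszP) _; lia.
have HQd_bound : forall k, (k <= n - d)%N ->
    ER_le (ER_add (ER_inf (Gset n d phi lam k)) (ERfin (- vd))) (valER v (pcoef (Q - Qapp)%R k)).
  move=> k Hk; rewrite -HQd.
  exact: (@quot_bound _ v Hv' phi P Bp n d vd lam Hdn HszBp HvBd HBpL HszP HPv k Hk).
split.
  split=> // k Hk; rewrite Hdiv; exact: HQd_bound.
split.
  rewrite prednK //; rewrite -ltnS -HszBp; exact: HszRd.
move=> i Hi.
have Hid' : (i < d)%N by rewrite -(prednK Hd1) ltnS.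
have Hin : (i <= n)%N by apply: leq_trans (ltnW Hid') Hdn.
have Hdomi : in_dom (INR d - 1) (INR i).
  have := INR_ltS1 _ _ Hid'; split; [exact: pos_INR | lra].
have [Hm1 Hm2] := cvxmin_le phi (fun x => ER_add (NF v Bapp x) (nf_delta n d phi (NF v Bapp))) Hdomi.
rewrite /pcoef HRd coefB; apply: valER_sub => //.
  exact: (ER_le_trans _ _ _ Hm1 (HPv i Hin)).
rewrite coefM; apply: valER_sum => // [[k Hk]] _ /=.
case: (leqP k (n - d)) => Hkn; last first.
  rewrite [((Q - Qapp)`_k)%R]nth_default; last exact: leq_trans HszQd Hkn.
  by rewrite mul0r valER_0 //; case: (nf_mod _ _ _ _ _).
apply: (ER_le_trans _ _ _ Hm2) => /=.
rewrite valER_mul //.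
have HQk := ER_le_trans _ _ _ (ER_add_mono _ _ _ _ (G_Delta n d phi (NF v Bapp) k) (ER_le_refl (ERfin (- vd)))) (HQd_bound k Hkn).
have Hki : (k <= i)%N by exact: Hk.
have Hikd : (i - k <= d)%N by apply: leq_trans (leq_subr _ _) (ltnW Hid').
have HBp := HBppsi _ Hikd.
move: HBp; rewrite /pcoef; case E: (valER v (Bp`_(i - k))%R) => [r||] HBp.
- have Hst := @psi_step _ v Bapp d vd lam i k r HdegB HNd Hki Hid' HNL' HBp.
  rewrite /nf_delta HNd /=.
  apply: (ER_le_trans _ _ _ (ER_add_mono _ _ _ _ Hst (ER_le_refl _))).
  apply: (ER_le_trans _ _ _ _ (ER_add_mono _ _ _ _ HQk (ER_le_refl (ERfin r)))).
  rewrite ER_add_comm !ER_add_finA.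
  have -> : nf_lambda d (NF v Bapp) * INR d - vd + (r + lam * INR k) =
            nf_lambda d (NF v Bapp) * (INR k + INR d) + - vd + r by rewrite /lam; ring.
  rewrite Rplus_assoc; exact: ER_le_refl.
- by case: (valER v _); case: (ER_add _ _).
- by move: (valER_nminf _ v (Bp`_(i - k))%R); rewrite E.
Qed.

Local Close Scope R_scope.
Unset Implicit Arguments.

Theorem proposition3p3 (K : fieldType) (v : K -> option Z) (Hv : complete_dvf v)
  (Aapp Bapp : {poly K}) (n d : nat)
  (HdegA : size Aapp = n.+1) (HdegB : size Bapp = d.+1)
  (Hd1 : (1 <= d)%N) (Hdn : (d <= n)%N)
  (HBlow : exists i : nat, (i < d)%N /\ pcoef Bapp i <> 0%R)
  (phiA phiB : R -> ER)
  (HphiA : newton_function n phiA) (HphiB : newton_function d phiB)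
  (HndA : precision_nondeg v n Aapp phiA) (HndB : precision_nondeg v d Bapp phiB) :
  let phi := ER_cvxmin (INR n) phiA
               (ER_infconv (INR d) (INR (n - d)) phiB
                  (nf_div n d (NF v Aapp) (NF v Bapp))) in
  let Qapp := (Aapp %/ Bapp)%R in
  let Rapp := (Aapp %% Bapp)%R in
  forall dA dB : {poly K},
    (size dA <= n.+1)%N -> (size dB <= d.+1)%N ->
    NF_ge v n dA phiA -> NF_ge v d dB phiB ->
    let Q := ((Aapp + dA) %/ (Bapp + dB))%R in
    let Rm := ((Aapp + dA) %% (Bapp + dB))%R in
    NF_ge v (n - d) (Q - Qapp)%R (nf_div n d phi (NF v Bapp)) /\
    NF_ge v d.-1 (Rm - Rapp)%R (nf_mod n d phi (NF v Bapp)).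
Proof. exact: prop_aux. Qed.
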